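(* For each integer $d\ge1$, with $[d]=\{1,\dots,d\}$, we have $|\mathcal Q_{[d]}|=\prod_{j=1}^d j!$.
   Context: For a finite set $J$ of non-negative integers, $\mathcal Q_J$ is the set of polynomials $\sum_{j\in J}t_jx^j$ with all $t_j\in(-1/2,1/2]$ such that $\sum_{j\in J}t_jm^j\in\mathbb Z$ for all $m\in\mathbb Z$. *)

(* Defs.v *)
From mathcomp Require Import all_boot all_order all_algebra.
From mathcomp Require Import reals.
Set Implicit Arguments. Unset Strict Implicit. Unset Printing Implicit Defensive.
Import Order.TTheory GRing.Theory Num.Theory.
Local Open Scope ring_scope.

Definition inQ (R : realType) (J : seq nat) (p : {poly R}) : Prop :=
  (forall j : nat, j \notin J -> p`_j = 0) /\
  (forall j : nat, j \in J -> - (1 / 2) < p`_j /\ p`_j <= 1 / 2) /\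
  (forall m : int, p.[m%:~R] \is a Num.int).

(* Main.v *)
Require Import Defs.
From mathcomp Require Import all_boot all_order all_algebra.
From mathcomp Require Import reals.
From mathcomp Require Import ring lra zify.
Import Order.TTheory GRing.Theory Num.Theory.
Local Open Scope ring_scope.

Definition fr {R : realType} (x : R) : R := x - (Num.ceil (x - 1/2))%:~R.

Lemma fr_itv {R : realType} (x : R) : -(1/2) < fr x <= 1/2.
Proof.
have /andP[h1 h2] := Num.Theory.ceil_itv (x - 1/2).
rewrite intrB in h1; rewrite /fr; set c := (Num.ceil _)%:~R in h1 h2 *.
apply/andP; split; lra.
Qed.

Lemma fr_id {R : realType} (x : R) : -(1/2) < x <= 1/2 -> fr x = x.
Proof.
move=> /andP[h1 h2]; rewrite /fr (@ceil_def _ _ 0) ?subr0 //.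
rewrite intrB /=; apply/andP; split; lra.
Qed.

Lemma fr_int_diff {R : realType} (x y : R) : x - y \is a Num.int -> fr x = fr y.
Proof.
move=> /intrP[m hm]; have -> : x = (y - 1/2) + m%:~R + 1/2 by rewrite -hm; ring.
rewrite /fr addrK ceilDrz ?intr_int // intrKceil intrD.
have -> : y - 1 / 2 + m%:~R + 1 / 2 = y + m%:~R by ring.
ring.
Qed.

Lemma fr_sub_int {R : realType} (x : R) : x - fr x \is a Num.int.
Proof. by rewrite /fr opprB addrC subrK intr_int. Qed.

Definition intpoly {R : realType} (p : {poly R}) := forall i, p`_i \is a Num.int.

Lemma intpolyB {R : realType} (p q : {poly R}) : intpoly p -> intpoly q -> intpoly (p - q).
Proof. by move=> hp hq i; rewrite coefB rpredB. Qed.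
Lemma intpolyD {R : realType} (p q : {poly R}) : intpoly p -> intpoly q -> intpoly (p + q).
Proof. by move=> hp hq i; rewrite coefD rpredD. Qed.
Lemma intpolyM {R : realType} (p q : {poly R}) : intpoly p -> intpoly q -> intpoly (p * q).
Proof. by move=> hp hq i; rewrite coefM rpred_sum // => j _; rewrite rpredM. Qed.
Lemma intpolyZ {R : realType} (c : int) (q : {poly R}) : intpoly q -> intpoly (c%:~R *: q).
Proof. by move=> hq i; rewrite coefZ rpredM ?intr_int. Qed.
Lemma intpoly0 {R : realType} : intpoly (0 : {poly R}).
Proof. by move=> i; rewrite coef0 rpred0. Qed.
Lemma intpoly1 {R : realType} : intpoly (1 : {poly R}).
Proof. by move=> i; rewrite coef1; case: (i == 0)%N; rewrite ?rpred0 ?rpred1. Qed.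
Lemma intpoly_sum {R : realType} (I : Type) (r : seq I) (F : I -> {poly R}) :
  (forall i, intpoly (F i)) -> intpoly (\sum_(i <- r) F i).
Proof.
move=> h; elim: r => [|a r IH]; first by rewrite big_nil; exact: intpoly0.
by rewrite big_cons; apply: intpolyD.
Qed.
Lemma intpoly_horner {R : realType} (p : {poly R}) (m : int) :
  intpoly p -> p.[m%:~R] \is a Num.int.
Proof.
by move=> h; rewrite horner_coef rpred_sum // => i _; rewrite rpredM ?rpredX ?intr_int.
Qed.

Definition reduce {R : realType} (q : {poly R}) : {poly R} :=
  \poly_(i < size q) fr q`_i.

Lemma fr0 {R : realType} : fr (0 : R) = 0.
Proof. apply: fr_id; apply/andP; split; lra. Qed.

Lemma coef_reduce {R : realType} (q : {poly R}) i : (reduce q)`_i = fr q`_i.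
Proof.
rewrite /reduce coef_poly; case: ltnP => // h.
by rewrite nth_default // fr0.
Qed.

Lemma reduce_eq {R : realType} (p q : {poly R}) :
  intpoly (p - q) -> reduce p = reduce q.
Proof.
move=> h; apply/polyP => i; rewrite !coef_reduce.
by apply: fr_int_diff; rewrite -coefB.
Qed.

Lemma reduce_id {R : realType} (p : {poly R}) :
  (forall i, -(1/2) < p`_i <= 1/2) -> reduce p = p.
Proof. by move=> h; apply/polyP => i; rewrite coef_reduce fr_id. Qed.

Lemma reduce_diff {R : realType} (q : {poly R}) : intpoly (q - reduce q).
Proof. by move=> i; rewrite coefB coef_reduce fr_sub_int. Qed.

Definition ff {R : realType} (k : nat) : {poly R} := \prod_(i < k) ('X - (i%:R)%:P).

Lemma ff_int {R : realType} k : intpoly (@ff R k).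
Proof.
apply: (big_ind (@intpoly R)); [exact: intpoly1 | exact: intpolyM|].
move=> i _; apply: intpolyB; last by move=> j; rewrite coefC; case: (j == 0)%N; rewrite ?rpred0 ?natr_int.
by move=> j; rewrite coefX; case: (j == 1)%N; rewrite ?rpred0 ?rpred1.
Qed.

Lemma size_ff {R : realType} k : size (@ff R k) = k.+1.
Proof. by rewrite /ff size_prod_XsubC /index_enum unlock /= -enumT size_enum_ord. Qed.

Lemma lead_ff {R : realType} k : (@ff R k)`_k = 1.
Proof. by have := lead_coef_prod_XsubC (index_enum 'I_k) xpredT (fun i : 'I_k => (i%:R : R)); rewrite /lead_coef /ff size_prod_XsubC /index_enum unlock /= -enumT size_enum_ord. Qed.

Lemma horner_ff {R : realType} k (x : R) : (ff k).[x] = \prod_(i < k) (x - i%:R).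
Proof. by rewrite /ff horner_prod; apply: eq_bigr => i _; rewrite hornerXsubC. Qed.

Lemma ff_nat {R : realType} k n : (@ff R k).[n%:R] = (n ^_ k)%:R.
Proof.
rewrite horner_ff; case: (leqP k n) => hk.
  rewrite ffact_prod natr_prod; apply: eq_bigr => i _.
  by rewrite natrB // ltnW // (leq_trans (ltn_ord i) hk).
by rewrite ffact_small // (bigD1 (Ordinal hk)) //= subrr mul0r.
Qed.

Lemma ff_neg {R : realType} k n :
  (@ff R k).[-(n%:R)] = (-1) ^+ k * ((n + k).-1 ^_ k)%:R.
Proof.
rewrite horner_ff.
have -> : \prod_(i < k) (- (n%:R : R) - i%:R) = \prod_(i < k) (-1 * (n + i)%:R).
  by apply: eq_bigr => i _; rewrite natrD; ring.
rewrite big_split /= prodr_const card_ord; congr (_ * _).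
rewrite ffact_prod natr_prod (reindex_inj rev_ord_inj) /=.
apply: eq_bigr => i _; congr (_%:R).
have := ltn_ord i; rewrite /=; lia.
Qed.

Lemma fact_neq0 {R : realType} k : (k`!%:R : R) != 0.
Proof. by rewrite pnatr_eq0 -lt0n fact_gt0. Qed.

Lemma ff_intval {R : realType} k (m : int) :
  (@ff R k).[m%:~R] / k`!%:R \is a Num.int.
Proof.
case: m => n.
  rewrite -pmulrn ff_nat -bin_ffact natrM mulfK ?fact_neq0 //.
rewrite NegzE mulrNz -pmulrn ff_neg -bin_ffact natrM mulrA mulfK ?fact_neq0 //.
by rewrite rpredM ?rpredX ?rpredN ?rpred1 ?natr_int.
Qed.

Definition bsum {R : realType} (a : nat -> int) n : {poly R} :=
  \sum_(k < n) ((a k)%:~R / k`!%:R) *: ff k.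

Lemma bsum_nat {R : realType} a n j :
  (@bsum R a n).[j%:R] = \sum_(k < n) (a k)%:~R * ('C(j, k))%:R.
Proof.
rewrite /bsum horner_sum; apply: eq_bigr => k _.
rewrite hornerZ ff_nat -bin_ffact natrM.
have := @fact_neq0 R k; move: (k`!%:R : R) => f hf; field; exact: hf.
Qed.

Lemma bsum_coef {R : realType} a n i : (n <= i)%N -> (@bsum R a n)`_i = 0.
Proof.
move=> h; rewrite /bsum coef_sum big1 // => k _.
rewrite coefZ nth_default ?mulr0 // size_ff.
by apply: leq_trans h; apply: ltn_ord.
Qed.

Lemma interp {R : realType} (p : {poly R}) :
  (forall j : nat, p.[j%:R] \is a Num.int) ->
  forall N, exists a, forall j, (j < N)%N -> p.[j%:R] = (bsum a N).[j%:R].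
Proof.
move=> hp; elim=> [|N [a IH]]; first by exists (fun=> 0) => j.
have : p.[N%:R] - (bsum a N).[N%:R] \is a Num.int.
  rewrite rpredB // bsum_nat rpred_sum // => k _.
  by rewrite rpredM ?intr_int ?natr_int.
move=> /intrP[v hv].
exists (fun k => if k == N then v else a k) => j hj.
have E : bsum (fun k => if k == N then v else a k) N.+1 =
         bsum a N + (v%:~R / N`!%:R) *: (ff N : {poly R}).
  rewrite /bsum big_ord_recr /= eqxx; congr (_ + _).
  by apply: eq_bigr => k _; rewrite ifN // neq_ltn ltn_ord.
rewrite E hornerD hornerZ ff_nat.
move: hj; rewrite ltnS leq_eqVlt => /orP[/eqP ->|hj].
  rewrite ffactnn -hv mulrAC mulfK ?fact_neq0 //; ring.
by rewrite ffact_small // mulr0 addr0 IH.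
Qed.

Lemma newton {R : realType} (p : {poly R}) n :
  (size p <= n.+1)%N ->
  (forall j : nat, p.[j%:R] \is a Num.int) ->
  exists a, p = bsum a n.+1.
Proof.
move=> hs hp; have [a ha] := interp p hp n.+1; exists a.
apply/eqP; rewrite -subr_eq0; apply/eqP.
set d := p - bsum a n.+1.
have hd : (size d <= n.+1)%N.
  apply/leq_sizeP => i hi; rewrite coefB bsum_coef // subr0.
  by move/leq_sizeP: hs; apply.
apply/eqP/negPn/negP => dn0.
have := max_poly_roots dn0 (rs := [seq (j%:R : R) | j <- iota 0 n.+1]).
rewrite size_map size_iota => H.
have : (n.+1 < size d)%N.
  apply: H.
  - apply/allP => x /mapP[j]; rewrite mem_iota add0n => /andP[_ hj] ->.
    by rewrite /root /d hornerD hornerN ha // subrr.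
  - rewrite map_inj_uniq ?iota_uniq // => x y /eqP; rewrite eqr_nat => /eqP.
    done.
by rewrite ltnNge hd.
Qed.

Fixpoint box (n : nat) : seq (seq nat) :=
  match n with
  | 0 => [:: [::]]
  | n'.+1 => [seq rcons c r | c <- box n', r <- iota 0 (n'.+1)`!]
  end.

Lemma size_box n : size (box n) = (\prod_(1 <= j < n.+1) j`!)%N.
Proof.
elim: n => [|n IH]; first by rewrite big_nil.
by rewrite /= size_allpairs IH size_iota [RHS]big_nat_recr.
Qed.

Lemma box_rcons n c : c \in box n.+1 ->
  exists c0 r, [/\ c = rcons c0 r, c0 \in box n & (r < n.+1`!)%N].
Proof.
move=> /allpairsP[[c0 r] /= [h1 h2 ->]]; exists c0, r; split => //.
by move: h2; rewrite mem_iota.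
Qed.

Lemma size_box_mem n c : c \in box n -> size c = n.
Proof.
elim: n c => [|n IH] c; first by rewrite inE => /eqP ->.
by move=> /box_rcons[c0 [r [-> h _]]]; rewrite size_rcons (IH _ h).
Qed.

Lemma uniq_box n : uniq (box n).
Proof.
elim: n => [|n IH] //=.
rewrite allpairs_uniq ?iota_uniq // => [[c r] [c' r']] _ _ /= /eqP.
by rewrite eqseq_rcons => /andP[/eqP -> /eqP ->].
Qed.

Lemma mem_box_of n c : size c = n -> (forall k, (k < n)%N -> (nth 0 c k < k.+1`!)%N) ->
  c \in box n.
Proof.
elim: n c => [|n IH] c.
  by move=> /size0nil ->.
case/lastP: c => [//|c r]; rewrite size_rcons => -[hs] h.
apply/allpairsP; exists (c, r) => /=; split => //.
  apply: IH => // k hk; have := h k (ltnW hk).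
  by rewrite nth_rcons hs hk.
rewrite mem_iota /=; have := h n (ltnSn n).
by rewrite nth_rcons hs ltnn eqxx.
Qed.

Definition qp {R : realType} (c : seq nat) : {poly R} :=
  \sum_(k < size c) ((nth 0%N c k)%:R / (k.+1)`!%:R) *: ff k.+1.

Lemma ffS_coef0 {R : realType} k : (@ff R k.+1)`_0 = 0.
Proof. by rewrite -horner_coef0 horner_ff big_ord_recl /= subrr mul0r. Qed.

Lemma ff0 {R : realType} : (@ff R 0) = 1.
Proof. by rewrite /ff big_ord0. Qed.

Lemma qpoly_coef0 {R : realType} c : (@qp R c)`_0 = 0.
Proof. by rewrite coef_sum big1 // => k _; rewrite coefZ ffS_coef0 mulr0. Qed.

Lemma qpoly_coef_big {R : realType} c j : (size c < j)%N -> (@qp R c)`_j = 0.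
Proof.
move=> h; rewrite coef_sum big1 // => k _; rewrite coefZ [(ff _)`_j]nth_default ?mulr0 //.
rewrite size_ff; apply: leq_trans h; rewrite ltnS; exact: ltn_ord.
Qed.

Lemma qpoly_intval {R : realType} c (m : int) : (@qp R c).[m%:~R] \is a Num.int.
Proof.
rewrite horner_sum rpred_sum // => k _; rewrite hornerZ.
have -> : forall x y z : R, x / y * z = x * (z / y) by move=> x y z; ring.
by rewrite rpredM ?natr_int ?ff_intval.
Qed.

Lemma qpoly_rcons {R : realType} c r :
  @qp R (rcons c r) = qp c + (r%:R / (size c).+1`!%:R) *: ff (size c).+1.
Proof.
rewrite /qp size_rcons big_ord_recr /= nth_rcons ltnn eqxx; congr (_ + _).
by apply: eq_bigr => k _; rewrite nth_rcons ltn_ord.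
Qed.

Lemma int_small (z : int) (r r' F : nat) : (r < F)%N -> (r' < F)%N ->
  (r%:Z - r'%:Z = z * F%:Z)%R -> r = r'.
Proof.
move=> h1 h2 h3; case: (ltrgtP z 0) => hz.
- have : ((z + 1) * F%:Z <= 0)%R by apply: mulr_le0_ge0; lia.
  rewrite mulrDl mul1r; lia.
- have : (0 <= (z - 1) * F%:Z)%R by apply: mulr_ge0; lia.
  rewrite mulrBl mul1r; lia.
- by move: h3; rewrite hz mul0r => /eqP; rewrite subr_eq0 => /eqP [].
Qed.

Lemma qpoly_inj {R : realType} n c c' : c \in box n -> c' \in box n ->
  intpoly (@qp R c - qp c') -> c = c'.
Proof.
elim: n c c' => [|n IH] c c'.
  by rewrite !inE => /eqP -> /eqP ->.
move=> /box_rcons[c0 [r [-> h0 hr]]] /box_rcons[c0' [r' [-> h0' hr']]].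
rewrite !qpoly_rcons (size_box_mem _ _ h0) (size_box_mem _ _ h0') => hi.
have hc : ((r%:R - r'%:R) / (n.+1)`!%:R : R) \is a Num.int.
  have := hi n.+1; rewrite coefB !coefD !coefZ !qpoly_coef_big ?(size_box_mem _ _ h0) ?(size_box_mem _ _ h0') //.
  by rewrite lead_ff !add0r !mulr1 -mulrBl.
move/intrP: hc => [z hz].
have hrr : r = r'.
  apply: (@int_small z _ _ _ hr hr'); apply/(@intr_inj R).
  rewrite intrB intrM -!pmulrn -hz mulfVK //; exact: fact_neq0.
subst r'; congr rcons; apply: IH => //.
by move: hi; rewrite opprD addrACA subrr addr0.
Qed.

Theorem mainTheorem14 (R : realType) (d : nat) (hd : (1 <= d)%N) :
  exists s : seq {poly R},
    [/\ uniq s,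
        size s = (\prod_(1 <= j < d.+1) j`!)%N &
        forall p : {poly R}, p \in s <-> inQ (iota 1 d) p].
Proof.
exists [seq reduce (qp c) | c <- box d]; split.
- rewrite map_inj_in_uniq ?uniq_box // => c c' hc hc' he.
  apply: (@qpoly_inj R d c c' hc hc').
  have := @intpolyB R _ _ (reduce_diff (@qp R c)) (reduce_diff (@qp R c')).
  rewrite he.
  have -> : forall a b r : {poly R}, (a - r) - (b - r) = a - b by move=> *; ring.
  done.
- by rewrite size_map size_box.
move=> p; split.
- move=> /mapP[c hc ->]; have hcs := size_box_mem _ _ hc.
  split; [|split].
  + move=> j hj; rewrite coef_reduce.
    case: j hj => [|j] hj; first by rewrite qpoly_coef0 fr0.
    rewrite qpoly_coef_big ?fr0 // hcs.
    move: hj; rewrite mem_iota; lia.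
  + by move=> j hj; rewrite coef_reduce; apply/andP; exact: fr_itv.
  + move=> m.
    have -> : reduce (@qp R c) = qp c - (qp c - reduce (qp c)) by ring.
    rewrite hornerD hornerN rpredB ?qpoly_intval //.
    exact: intpoly_horner (reduce_diff _).
move=> [h0 [h1 h2]].
have hs : (size p <= d.+1)%N.
  by apply/leq_sizeP => j hj; apply: h0; rewrite mem_iota; lia.
have hn : forall j : nat, p.[j%:R] \is a Num.int.
  by move=> j; have := h2 j; rewrite -pmulrn.
have [a ha] := newton p d hs hn.
set c := [seq `|(a k.+1 %% (k.+1)`!%:Z)%Z|%N | k <- iota 0 d].
have hcs : size c = d by rewrite size_map size_iota.
have hcn : forall k, (k < d)%N -> (nth 0%N c k)%:Z = (a k.+1 %% (k.+1)`!%:Z)%Z.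
  move=> k hk; rewrite (nth_map 0%N) ?size_iota // nth_iota // add0n gez0_abs //.
  by apply: modz_ge0; rewrite eqz_nat -lt0n fact_gt0.
have hc : c \in box d.
  apply: mem_box_of => // k hk; rewrite -ltz_nat hcn //.
  by apply: ltz_pmod; rewrite ltz_nat fact_gt0.
apply/mapP; exists c => //.
transitivity (reduce p).
  symmetry; apply: reduce_id => i.
  case hi: (i \in iota 1 d); first by apply/andP; exact: h1.
  rewrite h0 ?hi //; apply/andP; split; lra.
apply: reduce_eq.
have ha0 : ((a 0%N)%:~R : R) = 0.
  have := h0 0%N; rewrite mem_iota /= => /(_ isT).
  rewrite ha /bsum coef_sum big_ord_recl big1 ?addr0 => [|k _].
    by rewrite coefZ ff0 coef1 /= mulr1 divr1.
  by rewrite coefZ lift0 ffS_coef0 mulr0.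
rewrite ha /bsum big_ord_recl ha0 mul0r scale0r add0r /qp.
move: (hcn) => hcn'; rewrite -hcs in hcn' *.
rewrite -sumrB; apply: intpoly_sum => k.
rewrite lift0 -scalerBl -mulrBl.
have hk := ltn_ord k.
have -> : (a k.+1)%:~R - (nth 0%N c k)%:R =
          ((a k.+1 %/ (k.+1)`!%:Z)%Z)%:~R * ((k.+1)`!%:R : R).
  rewrite pmulrn hcn' // {1}(divz_eq (a k.+1) (k.+1)`!%:Z) intrD intrM -pmulrn.
  ring.
rewrite mulfK ?fact_neq0 //; apply: intpolyZ; exact: ff_int.
Qed.
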